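(* For every base $\mathscr{B}$ and every IPL formula $\theta$: $\Vdash^{*}_{\mathscr{B}}\theta$ if and only if $\Vdash_{\mathscr{B}}\theta$.
   Context: Fix a denumerable set $\mathbb{A}$ of atoms. IPL formulas are built from atoms and $\bot$ using $\wedge,\vee,\to$. An atomic rule has the form $(Q_1\triangleright q_1,\dots,Q_n\triangleright q_n)\Rightarrow q$ with $n\ge 0$, $q,q_i\in\mathbb{A}$ and $Q_i$ finite (possibly empty) sets of atoms. A base is a set of atomic rules. Derivability $\vdash_{\mathscr{B}}$ is the least relation such that $S\cup\{q\}\vdash_{\mathscr{B}} q$, and if $(Q_1\triangleright q_1,\dots,Q_n\triangleright q_n)\Rightarrow q\in\mathscr{B}$ and $S\cup Q_i\vdash_{\mathscr{B}} q_i$ for all $i$, then $S\vdash_{\mathscr{B}} q$. Sandqvist's support $\Vdash_{\mathscr{B}}$ is defined inductively by: (At) $\Vdash_{\mathscr{B}} p$ iff $\emptyset\vdash_{\mathscr{B}} p$; ($\to$) $\Vdash_{\mathscr{B}}\varphi\to\psi$ iff $\varphi\Vdash_{\mathscr{B}}\psi$; ($\wedge$) $\Vdash_{\mathscr{B}}\varphi\wedge\psi$ iff $\Vdash_{\mathscr{B}}\varphi$ and $\Vdash_{\mathscr{B}}\psi$; ($\vee$) $\Vdash_{\mathscr{B}}\varphi\vee\psi$ iff for every $\mathscr{C}\supseteq\mathscr{B}$ and atom $p$, if $\varphi\Vdash_{\mathscr{C}}p$ and $\psi\Vdash_{\mathscr{C}}p$ then $\Vdash_{\mathscr{C}}p$;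 ($\bot$) $\Vdash_{\mathscr{B}}\bot$ iff $\Vdash_{\mathscr{B}}p$ for all atoms $p$; (Inf) for nonempty finite $\Gamma$, $\Gamma\Vdash_{\mathscr{B}}\varphi$ iff for every $\mathscr{C}\supseteq\mathscr{B}$, if $\Vdash_{\mathscr{C}}\psi$ for all $\psi\in\Gamma$ then $\Vdash_{\mathscr{C}}\varphi$. The relation $\Vdash^{*}_{\mathscr{B}}$ is defined by the same clauses except that ($\wedge$) is replaced by ($\wedge^*$): $\Vdash^{*}_{\mathscr{B}}\varphi\wedge\psi$ iff for every $\mathscr{C}\supseteq\mathscr{B}$ and every atom $p$, if $\varphi,\psi\Vdash^{*}_{\mathscr{C}}p$ then $\Vdash^{*}_{\mathscr{C}}p$. *)

(* Defs.v *)
From Stdlib Require Import List.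
Import ListNotations.

Definition atom := nat.

Inductive formula : Type :=
| At  : atom -> formula
| Bot : formula
| And : formula -> formula -> formula
| Or  : formula -> formula -> formula
| Imp : formula -> formula -> formula.

(* Atomic rule (Q_1 |> q_1, ..., Q_n |> q_n) => q :
   a list of premises (finite set Q_i given as a list, and atom q_i), and a conclusion. *)
Definition rule : Type := (list (list atom * atom) * atom)%type.

Definition base : Type := rule -> Prop.

Definition base_sub (B C : base) : Prop := forall r, B r -> C r.

Inductive deriv (B : base) : list atom -> atom -> Prop :=
| deriv_ax : forall S q, In q S -> deriv B S q
| deriv_rule : forall S (prems : list (list atom * atom)) q,
    B (prems, q) ->
    (forall Qi qi, In (Qi, qi) prems -> deriv B (Qi ++ S) qi) ->
    deriv B S q.

(* Sandqvist's support  ||-_B phi  (Inf clause inlined for singleton contexts). *)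
Fixpoint supp (B : base) (phi : formula) {struct phi} : Prop :=
  match phi with
  | At p => deriv B [] p
  | Bot => forall p, deriv B [] p
  | And a b => supp B a /\ supp B b
  | Or a b => forall C, base_sub B C -> forall p : atom,
      (forall D, base_sub C D -> supp D a -> deriv D [] p) ->
      (forall D, base_sub C D -> supp D b -> deriv D [] p) ->
      deriv C [] p
  | Imp a b => forall C, base_sub B C -> supp C a -> supp C b
  end.

Fixpoint supp_star (B : base) (phi : formula) {struct phi} : Prop :=
  match phi with
  | At p => deriv B [] p
  | Bot => forall p, deriv B [] p
  | And a b => forall C, base_sub B C -> forall p : atom,
      (forall D, base_sub C D -> supp_star D a -> supp_star D b -> deriv D [] p) ->
      deriv C [] p
  | Or a b => forall C, base_sub B C -> forall p : atom,
      (forall D, base_sub C D -> supp_star D a -> deriv D [] p) ->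
      (forall D, base_sub C D -> supp_star D b -> deriv D [] p) ->
      deriv C [] p
  | Imp a b => forall C, base_sub B C -> supp_star C a -> supp_star C b
  end.

(* Main.v *)
Require Import Defs.
From Stdlib Require Import List.
Import ListNotations.

Lemma deriv_mono (B C : base) S q : base_sub B C -> deriv B S q -> deriv C S q.
Proof.
  intros HBC H. induction H.
  - apply deriv_ax; assumption.
  - eapply deriv_rule; eauto.
Qed.

Lemma supp_mono (phi : formula) : forall B C, base_sub B C -> supp B phi -> supp C phi.
Proof.
  induction phi; simpl; intros B C HBC H.
  - eapply deriv_mono; eauto.
  - intro p; eapply deriv_mono; eauto.
  - destruct H; split; eauto.
  - intros C' HC' p Ha Hb. apply H; auto. intros r Hr; apply HC', HBC, Hr.
  - intros C' HC' Ha. apply H; auto. intros r Hr; apply HC', HBC, Hr.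
Qed.

Lemma supp_elim (phi : formula) : forall B,
  (forall C, base_sub B C -> forall p,
     (forall D, base_sub C D -> supp D phi -> deriv D [] p) -> deriv C [] p) ->
  supp B phi.
Proof.
  induction phi; simpl; intros B H.
  - apply (H B (fun r x => x) a). auto.
  - intro p. apply (H B (fun r x => x) p). auto.
  - split.
    + apply IHphi1. intros C HC p Hp. apply H; auto. intros D HD [Ha Hb]. auto.
    + apply IHphi2. intros C HC p Hp. apply H; auto. intros D HD [Ha Hb]. auto.
  - intros C HC p Ha Hb. apply H; auto. intros D HD Hor.
    apply (Hor D (fun r x => x) p).
    + intros D' HD' HA. apply Ha; auto. intros r Hr; apply HD', HD, Hr.
    + intros D' HD' HB. apply Hb; auto. intros r Hr; apply HD', HD, Hr.
  - intros C HC Ha. apply IHphi2. intros C' HC' p Hp. apply H.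
    + intros r Hr; apply HC', HC, Hr.
    + intros D HD Himp. apply Hp; auto. apply Himp; [intros r x; exact x|].
      eapply supp_mono; [|exact Ha]. intros r Hr; apply HD, HC', Hr.
Qed.

Theorem mainTheorem2 (B : base) (theta : formula) :
  supp_star B theta <-> supp B theta.
Proof.
  revert B. induction theta; intro B; simpl.
  - tauto.
  - tauto.
  - split.
    + intro H. split.
      * apply supp_elim. intros C HC p Hp. apply H; auto.
        intros D HD Ha Hb. apply Hp; auto. apply IHtheta1; auto.
      * apply supp_elim. intros C HC p Hp. apply H; auto.
        intros D HD Ha Hb. apply Hp; auto. apply IHtheta2; auto.
    + intros [Ha Hb] C HC p Hp. apply Hp; [intros r x; exact x| |].
      * apply IHtheta1. eapply supp_mono; eauto.
      * apply IHtheta2. eapply supp_mono; eauto.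
  - split; intros H C HC p Ha Hb; apply H; auto.
    + intros D HD X; apply Ha; auto; apply IHtheta1; auto.
    + intros D HD X; apply Hb; auto; apply IHtheta2; auto.
    + intros D HD X; apply Ha; auto; apply IHtheta1; auto.
    + intros D HD X; apply Hb; auto; apply IHtheta2; auto.
  - split; intros H C HC X; apply IHtheta2; apply H; auto; apply IHtheta1; auto.
Qed.
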